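(* Let $p$ be an odd prime, $\mathcal O$ the ring of integers of a finite extension of $\mathbb Q_p$, $g\ge0$ and $r\ge0$. Then (1) $\mathrm{Fil}^r(V_g(\mathcal O))$ is stable under the action of $S_0(p)$; (2) if $P\in\mathrm{Fil}^r(V_g(\mathcal O))$, then $P\big|\begin{pmatrix}1&a\\0&p\end{pmatrix}\in p^rV_g(\mathcal O)$ for every integer $a$.
   Context: $V_g(\mathcal O)$: homogeneous degree-$g$ polynomials in $X,Y$ over $\mathcal O$, with right action of integer matrices $(P|\gamma)(X,Y)=P(dX-cY,-bX+aY)$ for $\gamma=\begin{pmatrix}a&b\\c&d\end{pmatrix}$. $S_0(p)=\{\begin{pmatrix}a&b\\c&d\end{pmatrix}\in M_2(\mathbb Z):ad-bc\ne0,\ p\mid c,\ p\nmid a\}$. $\mathrm{Fil}^r(V_g(\mathcal O))=\{\sum_{j=0}^gb_jX^jY^{g-j}\in V_g(\mathcal O):p^{r-j}\mid b_j\text{ for }0\le j\le r-1\}$. *)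

(* Defs.v *)
From HB Require Import structures.
From mathcomp Require Import all_boot all_order all_algebra.
From mathcomp Require Import mpoly.
Set Implicit Arguments. Unset Strict Implicit. Unset Printing Implicit Defensive.
Import Order.TTheory GRing.Theory Num.Theory.
Local Open Scope ring_scope.

Definition i0 : 'I_2 := ord0.
Definition i1 : 'I_2 := ord_max.

(* Polynomials in X = 'X_i0, Y = 'X_i1 over O. *)

Definition mx2 (a b c d : int) : 'M[int]_2 :=
  \matrix_(i < 2, j < 2)
     (if i == i0 then (if j == i0 then a else b)
      else (if j == i0 then c else d)).

(* Right action (P | gamma)(X, Y) = P(dX - cY, -bX + aY) *)
Definition act (O : comNzRingType) (P : {mpoly O[2]}) (gam : 'M[int]_2)
  : {mpoly O[2]} :=
  P \mPo [tuple ((gam i1 i1)%:~R *: 'X_i0 - (gam i1 i0)%:~R *: 'X_i1);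
                (- ((gam i0 i1)%:~R *: 'X_i0) + (gam i0 i0)%:~R *: 'X_i1)].

Definition Vg (O : comNzRingType) (g : nat) (P : {mpoly O[2]}) : Prop :=
  P \is g.-homog.

Definition S0 (p : nat) (gam : 'M[int]_2) : Prop :=
  \det gam != 0 /\ (p%:Z %| gam i1 i0)%Z /\ ~~ (p%:Z %| gam i0 i0)%Z.

Definition dvdO (O : comNzRingType) (x y : O) : Prop := exists u : O, y = x * u.

Definition bcoef (O : comNzRingType) (g j : nat) (P : {mpoly O[2]}) : O :=
  P@_[multinom [tuple j; (g - j)%N]].

Definition Fil (O : comNzRingType) (p r g : nat) (P : {mpoly O[2]}) : Prop :=
  Vg g P /\
  forall j : nat, (j < r)%N -> dvdO ((p%:R : O) ^+ (r - j)) (bcoef g j P).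

Definition pVg (O : comNzRingType) (p r g : nat) (P : {mpoly O[2]}) : Prop :=
  exists Q : {mpoly O[2]}, Vg g Q /\ P = (p%:R : O) ^+ r *: Q.

(* Main.v *)
Require Import Defs.
From HB Require Import structures.
From mathcomp Require Import all_boot all_order all_algebra.
From mathcomp Require Import mpoly.
From mathcomp Require Import zify.
Import Order.TTheory GRing.Theory Num.Theory.
Local Open Scope ring_scope.

Section H.
Variable O : comNzRingType.
Variable p : nat.
Local Notation pp := (p%:R : O).

Lemma dvdO0 (x : O) : dvdO x 0. Proof. by exists 0; rewrite mulr0. Qed.
Lemma dvdO1 (x : O) : dvdO 1 x. Proof. by exists x; rewrite mul1r. Qed.
Lemma dvdOD (x y z : O) : dvdO x y -> dvdO x z -> dvdO x (y + z).
Proof. by move=> [u ->] [v ->]; exists (u + v); rewrite mulrDr. Qed.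
Lemma dvdOMr (x y z : O) : dvdO x y -> dvdO x (z * y).
Proof. by move=> [u ->]; exists (z * u); rewrite mulrCA. Qed.
Lemma dvdO_trans (x y z : O) : dvdO x y -> dvdO y z -> dvdO x z.
Proof. by move=> [u ->] [v ->]; exists (u * v); rewrite mulrA. Qed.
Lemma dvdO_exp a b : (a <= b)%N -> dvdO (pp ^+ a) (pp ^+ b).
Proof. by move=> h; exists (pp ^+ (b - a)); rewrite -exprD subnKC. Qed.

Definition Gd (n : nat) (Q : {mpoly O[2]}) :=
  forall m : 'X_{1..2}, dvdO (pp ^+ (n - m i0)) Q@_m.

Lemma Gd_mono n n' Q : (n' <= n)%N -> Gd n Q -> Gd n' Q.
Proof.
move=> h G m; apply: dvdO_trans (G m); apply: dvdO_exp; exact: leq_sub2r.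
Qed.
Lemma Gd0 Q : Gd 0 Q.
Proof. by move=> m; rewrite sub0n expr0; apply: dvdO1. Qed.
Lemma GdD n Q R : Gd n Q -> Gd n R -> Gd n (Q + R).
Proof. by move=> GQ GR m; rewrite mcoeffD; apply: dvdOD. Qed.
Lemma GdZ n c Q : Gd n Q -> Gd n (c *: Q).
Proof. by move=> GQ m; rewrite mcoeffZ; apply: dvdOMr. Qed.
Lemma GdN n Q : Gd n Q -> Gd n (- Q).
Proof. by move=> GQ; rewrite -scaleN1r; apply: GdZ. Qed.
Lemma Gdp n s Q : Gd n Q -> Gd (n + s) (pp ^+ s *: Q).
Proof.
move=> GQ m; rewrite mcoeffZ; case: (GQ m) => u ->.
apply: (@dvdO_trans _ (pp ^+ (n - m i0 + s))).
  apply: dvdO_exp; lia.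
by exists u; rewrite exprD mulrCA mulrA.
Qed.

Lemma mcoeffMXU (Q : {mpoly O[2]}) (i : 'I_2) m :
  (Q * 'X_i)@_m = if (0 < m i)%N then Q@_(m - U_(i))%MM else 0.
Proof.
case: ifP => h.
  have -> : m = (U_(i) + (m - U_(i)))%MM.
    rewrite addmC submK //; apply/mnm_lepP => j; rewrite mnm1E.
    by case: eqP => [<-|]; rewrite ?h.
  by rewrite mcoeffMX addmC addmK.
rewrite mpolyME raddf_sum big1 // => k _ /=.
rewrite mcoeffZ !mcoeffX; case: eqP => [e|_]; last by rewrite mulr0 mul0r.
case: eqP => [e'|_]; last by rewrite mulr0.
by move: h; rewrite -e' mnmDE -e mnm1E eqxx addn1.
Qed.

Lemma GdX0 n Q : Gd n Q -> Gd n.+1 (Q * 'X_i0).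
Proof.
move=> G m; rewrite mcoeffMXU; case: ifP => h; last exact: dvdO0.
have := G (m - U_(i0))%MM; rewrite mnmBE mnm1E eqxx.
by have -> : (n - (m i0 - 1) = n.+1 - m i0)%N by lia.
Qed.

Lemma GdX1 n Q : Gd n Q -> Gd n (Q * 'X_i1).
Proof.
move=> G m; rewrite mcoeffMXU; case: ifP => h; last exact: dvdO0.
by have := G (m - U_(i1))%MM; rewrite mnmBE mnm1E /= subn0.
Qed.

Lemma GdL n Q (c d : int) : (p%:Z %| c)%Z -> Gd n Q ->
  Gd n.+1 (Q * (d%:~R *: 'X_i0 - c%:~R *: 'X_i1)).
Proof.
move=> /dvdzP [c' ->] G.
rewrite mulrBr -!scalerAr; apply: GdD; first exact/GdZ/GdX0.
apply: GdN; rewrite intrM -scalerA; apply: GdZ.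
have -> : ((p%:Z)%:~R : O) = pp ^+ 1 by rewrite expr1.
rewrite -addn1; apply: Gdp; exact: GdX1.
Qed.
Lemma Gd_sum n (s : seq 'X_{1..2}) (F : 'X_{1..2} -> {mpoly O[2]}) :
  (forall m, m \in s -> Gd n (F m)) -> Gd n (\sum_(m <- s) F m).
Proof.
elim: s => [|x s IH] H; first by rewrite big_nil => m; rewrite mcoeff0; apply: dvdO0.
rewrite big_cons; apply: GdD; first by apply: H; rewrite inE eqxx.
by apply: IH => m ms; apply: H; rewrite inE ms orbT.
Qed.
End H.
Lemma lift00 : lift ord0 ord0 = i1 :> 'I_2. Proof. exact/val_inj. Qed.

Lemma act_expand (O : comNzRingType) (P : {mpoly O[2]}) gam :
  act P gam = \sum_(m <- msupp P) P@_m *: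
    (((gam i1 i1)%:~R *: 'X_i0 - (gam i1 i0)%:~R *: 'X_i1) ^+ m i0 *
     (- ((gam i0 i1)%:~R *: 'X_i0) + (gam i0 i0)%:~R *: 'X_i1) ^+ m i1).
Proof.
rewrite /act comp_mpolyEX; apply: eq_bigr => m _; rewrite comp_mpolyX.
by rewrite big_ord_recl big_ord1 lift00.
Qed.
Lemma mdeg2 (m : 'X_{1..2}) : mdeg m = (m i0 + m i1)%N.
Proof. by rewrite mdegE big_ord_recl big_ord1 lift00. Qed.
Lemma mm0 j k : [multinom [tuple j; k]] i0 = j.
Proof. by rewrite multinomE. Qed.
Lemma mm1 j k : [multinom [tuple j; k]] i1 = k.
Proof. by rewrite multinomE. Qed.
Lemma mm_eq (m : 'X_{1..2}) : m = [multinom [tuple m i0; m i1]].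
Proof.
apply/mnmP => i; rewrite multinomE; case: i => [[|[|//]] Hi].
- by rewrite (_ : Ordinal Hi = i0) //; exact/val_inj.
- by rewrite (_ : Ordinal Hi = i1) //; exact/val_inj.
Qed.

Lemma hom_sum (O : comNzRingType) g (s : seq 'X_{1..2}) (F : 'X_{1..2} -> {mpoly O[2]}) :
  (forall m, m \in s -> F m \is g.-homog) -> \sum_(m <- s) F m \is g.-homog.
Proof.
elim: s => [|x s IH] H; first by rewrite big_nil dhomog0.
rewrite big_cons; apply: dhomogD; first by apply: H; rewrite inE eqxx.
by apply: IH => m ms; apply: H; rewrite inE ms orbT.
Qed.

Lemma homL (O : comNzRingType) (x y : O) :
  (x *: 'X_i0 + y *: 'X_i1 : {mpoly O[2]}) \is 1.-homog.
Proof. by apply: dhomogD; apply: dhomogZ; rewrite dhomogX /= mdeg1. Qed.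

Lemma homT (O : comNzRingType) (x y z w : O) a b :
  ((x *: 'X_i0 + y *: 'X_i1) ^+ a * (z *: 'X_i0 + w *: 'X_i1) ^+ b
     : {mpoly O[2]}) \is (a + b).-homog.
Proof.
have := dhomogM (dhomogMn a (homL _ x y)) (dhomogMn b (homL _ z w)).
by rewrite !mul1n.
Qed.

Lemma coef_eq (O : comNzRingType) g (P : {mpoly O[2]}) m :
  Vg g P -> m \in msupp P -> P@_m = bcoef g (m i0) P /\ (m i0 + m i1 = g)%N.
Proof.
move=> HP mP; have hm : mdeg m = g by exact: (dhomog_mf HP mP).
rewrite mdeg2 in hm; split => //; rewrite /bcoef.
have -> : (g - m i0 = m i1)%N by lia.
by rewrite -mm_eq.
Qed.
Arguments coef_eq {O g P m}.

Theorem lemma6p4 (O : comNzRingType) (p g r : nat) :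
  prime p -> odd p ->
  (forall (P : {mpoly O[2]}) (gam : 'M[int]_2),
      Fil p r g P -> S0 p gam -> Fil p r g (act P gam)) /\
  (forall (P : {mpoly O[2]}) (a : int),
      Fil p r g P -> pVg p r g (act P (mx2 1 a 0 p%:Z))).
Proof.
move=> _ _; split.
- move=> P gam [HP HF] [_ [Hc _]].
  have HA : Vg g (act P gam).
    rewrite act_expand -!scaleNr; apply: hom_sum => m mP; apply: dhomogZ.
    have [_ <-] := coef_eq HP mP; exact: homT.
  have GA : Gd O p r (act P gam).
    rewrite act_expand; apply: Gd_sum => m mP.
    have [Hb _] := coef_eq HP mP.
    rewrite mulrC.
    have Gk : forall k, Gd O p k
      ((- ((gam i0 i1)%:~R *: 'X_i0) + (gam i0 i0)%:~R *: 'X_i1) ^+ m i1 *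
       ((gam i1 i1)%:~R *: 'X_i0 - (gam i1 i0)%:~R *: 'X_i1) ^+ k).
      elim => [|k IH]; first exact: Gd0.
      by rewrite exprSr mulrA; apply: GdL.
    case: (ltnP (m i0) r) => h.
      have [u Hu] := HF _ h.
      rewrite Hb Hu -scalerA.
      have := Gdp _ _ _ (r - m i0) _ (GdZ _ _ _ u _ (Gk (m i0))); rewrite subnKC ?(ltnW h) //.
    by apply: GdZ; apply: (Gd_mono _ _ _ _ _ h (Gk _)).
  split => // j jr; rewrite /bcoef.
  by have := GA [multinom [tuple j; (g - j)%N]]; rewrite mm0.
- move=> P a [HP HF].
  rewrite act_expand /mx2 !mxE /=.
  have -> : ((p%:Z)%:~R : O) = p%:R by [].
  rewrite scale0r subr0.
  set L1 := (- (a%:~R *: 'X_i0) + 1%:~R *: 'X_i1 : {mpoly O[2]}).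
  have hL1 : L1 \is 1.-homog by rewrite /L1 -scaleNr; exact: homL.
  have hX : ('X_i0 : {mpoly O[2]}) \is 1.-homog by rewrite dhomogX /= mdeg1.
  suff key : forall s, {subset s <= msupp P} -> pVg p r g
    (\sum_(m <- s) P@_m *: ((p%:R *: 'X_i0) ^+ m i0 * L1 ^+ m i1)).
    exact: key.
  elim => [|x s IH] sub.
    by exists 0; rewrite big_nil scaler0; split => //; exact: dhomog0.
  have [Q [HQ EQ]] := IH (fun y ys => sub y (mem_behead (s := x :: s) ys)).
  have xP : x \in msupp P by apply: sub; rewrite inE eqxx.
  have [Hb Hd] := coef_eq HP xP.
  set W := ('X_i0 ^+ x i0 * L1 ^+ x i1 : {mpoly O[2]}).
  have HW : W \is g.-homog.
    have := dhomogM (dhomogMn (x i0) hX) (dhomogMn (x i1) hL1).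
    by rewrite !mul1n Hd.
  rewrite big_cons.
  have -> : P@_x *: ((p%:R *: 'X_i0) ^+ x i0 * L1 ^+ x i1) =
            (P@_x * p%:R ^+ x i0) *: W.
    by rewrite exprZn -scalerAl scalerA.
  rewrite EQ.
  case: (ltnP (x i0) r) => h.
    have [u Hu] := HF _ h.
    exists (u *: W + Q); split; first exact: dhomogD (dhomogZ _ HW) HQ.
    rewrite Hb Hu scalerDr scalerA; congr (_ *: _ + _).
    by rewrite mulrAC -exprD subnK // ltnW.
  exists ((P@_x * p%:R ^+ (x i0 - r)) *: W + Q); split.
    exact: dhomogD (dhomogZ _ HW) HQ.
  rewrite scalerDr scalerA; congr (_ *: _ + _).
  by rewrite -(subnKC h) exprD mulrCA subnKC // addKn.
Qed.
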